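(* Let $K$ be a field of characteristic $0$, let $E$ be the infinite-dimensional unitary Grassmann algebra over $K$ with even part $E_0$, let $A=\begin{pmatrix} E_0 & E\\ 0 & E\end{pmatrix}$, and let $F_n(A)=K\langle x_1,\dots,x_n\rangle/(K\langle x_1,\dots,x_n\rangle\cap T(A))$. If $n\geq 2$ and $m\geq 2$, then the polynomial \[f_m^{(1)}=[x_2,x_1,\dots,x_1]\] (a left-normed commutator of length $m$ with $x_2$ followed by $m-1$ copies of $x_1$) is not a polynomial identity of $F_n(A)$.
   Context: All algebras are associative and unitary over $K$; $T(A)$ is the ideal of polynomial identities of $A$. $E$ is generated by anticommuting $e_1,e_2,\dots$ and $E_0$ is the span of basis products of even length. Commutators: $[a,b]=ab-ba$, $[a_1,\dots,a_k]=[[a_1,\dots,a_{k-1}],a_k]$. *)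

(* Defs.v *)
From HB Require Import structures.
From mathcomp Require Import all_boot all_order all_algebra.
From mathcomp Require Import finmap.
Set Implicit Arguments.
Unset Strict Implicit.
Unset Printing Implicit Defensive.
Import Order.TTheory GRing.Theory Num.Theory.
Local Open Scope ring_scope.
Local Open Scope fset_scope.

Section Defs.
Variable K : fieldType.

(* Noncommutative polynomials K<x_0,...,x_{n-1}> as expressions.       *)
(* (x_1,...,x_n of the paper are tVar 0, ..., tVar (n-1).)             *)
Inductive term (n : nat) : Type :=
| tVar of 'I_n
| tCst of K
| tAdd of term n & term n
| tMul of term n & term n.

Definition tComm n (a b : term n) : term n :=
  tAdd (tMul a b) (tMul (tCst n (-1)) (tMul b a)).

Fixpoint substT n k (g : 'I_n -> term k) (t : term n) : term k :=
  match t with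
  | tVar i => g i
  | tCst c => tCst k c
  | tAdd s u => tAdd (substT g s) (substT g u)
  | tMul s u => tMul (substT g s) (substT g u)
  end.

(* The infinite-dimensional unitary Grassmann algebra E over K.       *)
(* Basis: e_S = e_{s_1} ... e_{s_k} (s_1 < ... < s_k), S a finite set *)
(* of indices (S = empty gives 1).  An element is represented by a     *)
(* finite list of (coefficient, basis set) pairs; its actual value is  *)
(* its coefficient function coefE, so two lists represent the same     *)
(* element of E iff they have the same coefficient function.           *)
Definition Erep := seq (K * {fset nat}).

Definition coefE (a : Erep) (U : {fset nat}) : K :=
  \sum_(p <- a | p.2 == U) p.1.

Definition eqE (a b : Erep) : Prop := forall U, coefE a U = coefE b U.

(* e_S e_T = (-1)^{#{(s,t) in S x T | t < s}} e_{S u T} if S, T disjoint, 0 otherwise *)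
Definition signE (S T : {fset nat}) : K :=
  (-1) ^+ (\sum_(s <- enum_fset S) \sum_(t <- enum_fset T) (t < s)%N)%N.

Definition addE (a b : Erep) : Erep := a ++ b.
Definition cstE (c : K) : Erep := [:: (c, fset0)].
Definition genE (i : nat) : Erep := [:: (1, [fset i])].
Definition mulE (a b : Erep) : Erep :=
  [seq (((p.2 `&` q.2 == fset0) %:R) * signE p.2 q.2 * p.1 * q.1, p.2 `|` q.2)
  | p <- a, q <- b].

Definition inE0 (a : Erep) : Prop := forall U, odd #|` U| -> coefE a U = 0.

(* A = [[E_0, E], [0, E]] : (a, b, c) stands for the matrix            *)
(*   ( a  b )                                                          *)
(*   ( 0  c )   with a in E_0, b, c in E.                              *)
Definition Arep := (Erep * Erep * Erep)%type.

Definition inA (x : Arep) : Prop := inE0 x.1.1.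

Definition addA (x y : Arep) : Arep :=
  (addE x.1.1 y.1.1, addE x.1.2 y.1.2, addE x.2 y.2).
Definition mulA (x y : Arep) : Arep :=
  (mulE x.1.1 y.1.1, addE (mulE x.1.1 y.1.2) (mulE x.1.2 y.2), mulE x.2 y.2).
Definition cstA (c : K) : Arep := (cstE c, [::], cstE c).

Definition zeroA (x : Arep) : Prop :=
  eqE x.1.1 [::] /\ eqE x.1.2 [::] /\ eqE x.2 [::].

Fixpoint evalA n (v : 'I_n -> Arep) (t : term n) : Arep :=
  match t with
  | tVar i => v i
  | tCst c => cstA c
  | tAdd s u => addA (evalA v s) (evalA v u)
  | tMul s u => mulA (evalA v s) (evalA v u)
  end.

Definition PI_A k (f : term k) : Prop :=
  forall v : 'I_k -> Arep, (forall i, inA (v i)) -> zeroA (evalA v f).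

(* F_n(A) = K<x_1..x_n> / (K<x_1..x_n> \cap T(A)).  Its elements are   *)
(* classes of g in K<x_1..x_n>, and the class of g is zero iff g is in  *)
(* T(A).  Since the quotient map is an algebra morphism,                *)
(* f(class g_1, ..., class g_k) = class (f(g_1,...,g_k)); hence f is a  *)
(* polynomial identity of F_n(A) iff f(g_1,...,g_k) \in T(A) for all    *)
(* g_1, ..., g_k in K<x_1..x_n>.                                        *)
Definition PI_Fn (n k : nat) (f : term k) : Prop :=
  forall g : 'I_k -> term n, PI_A (substT g f).

Definition x1 : term 2 := tVar (@Ordinal 2 0 isT).
Definition x2 : term 2 := tVar (@Ordinal 2 1 isT).

Definition f1 (m : nat) : term 2 := iter m.-1 (fun u => tComm u x1) x2.

End Defs.

(* Main.v *)
Require Import Defs.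
From HB Require Import structures.
From mathcomp Require Import all_boot all_order all_algebra.
From mathcomp Require Import finmap.
From mathcomp Require Import ring.
Import GRing.Theory.
Set Implicit Arguments.
Unset Strict Implicit.
Local Open Scope fset_scope.
Local Open Scope ring_scope.

Section Aux.
Variable K : fieldType.

Definition sc (a : Erep K) : bool := all (fun p => p.2 == fset0) a.
Definition scal (a : Erep K) : K := \sum_(p <- a) p.1.

Lemma signE00 : signE K fset0 fset0 = 1.
Proof. by rewrite /signE big_seq_fset0 expr0. Qed.

Lemma coef_sc0 (a : Erep K) : sc a -> Defs.coefE a fset0 = scal a.
Proof.
elim: a => [|p a IH] /=; first by rewrite /Defs.coefE /scal !big_nil.
move=> /andP [hp ha]; rewrite /Defs.coefE /scal !big_cons hp.
by rewrite -/(scal a) -IH.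
Qed.

Lemma coef_scU (a : Erep K) U : sc a -> U != fset0 -> Defs.coefE a U = 0.
Proof.
move=> ha hU; elim: a ha => [|p a IH] /=; first by rewrite /Defs.coefE big_nil.
move=> /andP [/eqP hp ha]; rewrite /Defs.coefE big_cons hp eq_sym (negbTE hU).
exact: IH.
Qed.

Lemma sc_add a b : sc a -> sc b -> sc (addE a b) /\ scal (addE a b) = scal a + scal b.
Proof. move=> ha hb; rewrite /addE /scal big_cat; split => //. by rewrite /sc all_cat; apply/andP. Qed.

Lemma sc_cst c : sc (cstE c) /\ scal (cstE c) = c.
Proof. by rewrite /sc /cstE /= /scal big_seq1. Qed.

Lemma sc_nil : sc ([::] : Erep K) /\ scal ([::] : Erep K) = 0.
Proof. by rewrite /scal big_nil. Qed.

Lemma sc_mul a b : sc a -> sc b -> sc (mulE a b) /\ scal (mulE a b) = scal a * scal b.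
Proof.
rewrite /mulE; elim: a => [|p a IH] /=.
  by move=> _ _; rewrite /scal !big_nil mul0r.
move=> /andP [/eqP hp ha] hb; have [h1 h2] := IH ha hb.
have hm : forall b', sc b' ->
  sc [seq (((p.2 `&` q.2 == fset0)%:R) * signE K p.2 q.2 * p.1 * q.1, p.2 `|` q.2) | q <- b']
  /\ scal [seq (((p.2 `&` q.2 == fset0)%:R) * signE K p.2 q.2 * p.1 * q.1, p.2 `|` q.2) | q <- b']
     = p.1 * scal b'.
  elim=> [|q b' IHb] /=; first by rewrite /scal !big_nil mulr0.
  move=> /andP [/eqP hq hb']; have [k1 k2] := IHb hb'.
  rewrite /sc /= hp hq fsetUid eqxx /=; rewrite hp in k1 k2; split; first exact: k1.
  rewrite /scal big_cons /= -/(scal _) k2 /scal big_cons.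
  by rewrite fsetIid eqxx signE00 mul1r mul1r mulrDr.
have [k1 k2] := hm b hb.
split; first by rewrite /sc all_cat; apply/andP.
rewrite /scal big_cat /=. rewrite /scal in k2 h2. by rewrite k2 h2 big_cons mulrDl.
Qed.

Definition repT (x : Arep K) (a b c : K) :=
  [/\ sc x.1.1, sc x.1.2, sc x.2 & (scal x.1.1 = a /\ scal x.1.2 = b /\ scal x.2 = c)].

Lemma repT_add x y a b c a' b' c' : repT x a b c -> repT y a' b' c' ->
  repT (Defs.addA x y) (a + a') (b + b') (c + c').
Proof.
case=> h1 h2 h3 [e1 [e2 e3]] [g1 g2 g3 [f1 [f2 f3]]].
have [u1 v1] := sc_add h1 g1; have [u2 v2] := sc_add h2 g2; have [u3 v3] := sc_add h3 g3.
by split => //=; rewrite v1 v2 v3 e1 e2 e3 f1 f2 f3.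
Qed.

Lemma repT_mul x y a b c a' b' c' : repT x a b c -> repT y a' b' c' ->
  repT (Defs.mulA x y) (a * a') (a * b' + b * c') (c * c').
Proof.
case=> h1 h2 h3 [e1 [e2 e3]] [g1 g2 g3 [f1 [f2 f3]]].
have [u1 v1] := sc_mul h1 g1; have [u3 v3] := sc_mul h3 g3.
have [w1 z1] := sc_mul h1 g2; have [w2 z2] := sc_mul h2 g3.
have [u2 v2] := sc_add w1 w2.
by split => //=; rewrite ?v1 ?v2 ?v3 ?z1 ?z2 e1 e2 e3 f1 f2 f3.
Qed.

Lemma repT_cst c : repT (Defs.cstA c) c 0 c.
Proof. have [h e] := sc_cst c; have [h' e'] := sc_nil; by split. Qed.

End Aux.

Theorem lemma3p5 (K : fieldType) (charK0 : [pchar K]%R =i pred0)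
  (n m : nat) (hn : (2 <= n)%N) (hm : (2 <= m)%N) :
  ~ @PI_Fn K n 2 (f1 K m).
Proof.
move=> H.
have h0 : (0 < n)%N by apply: leq_trans hn.
have h1 : (1 < n)%N by [].
pose i0 : 'I_n := Ordinal h0. pose i1 : 'I_n := Ordinal h1.
pose g : 'I_2 -> term K n := fun j => if val j == 0%N then @tVar K n i0 else @tVar K n i1.
pose X1 : Arep K := (cstE 1, [::], [::]).
pose X2 : Arep K := ([::], cstE 1, [::]).
pose v : 'I_n -> Arep K := fun i => if i == i0 then X1 else X2.
have rX1 : repT X1 1 0 0.
  have [h e] := sc_cst (1 : K); have [h' e'] := sc_nil K; by split.
have rX2 : repT X2 0 1 0.
  have [h e] := sc_cst (1 : K); have [h' e'] := sc_nil K; by split.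
have inAv : forall i, inA (v i).
  move=> i U hU; have hU0 : (U : {fset nat}) != fset0.
    by apply/eqP => hh; move: hU; rewrite hh cardfs0.
  rewrite /v; case: (i == i0).
  - by apply: coef_scU => //; case: rX1.
  - by apply: coef_scU => //; case: rX2.
have key : forall k, repT (evalA v (substT g (iter k (fun u => tComm u (x1 K)) (x2 K))))
                          0 ((-1) ^+ k) 0.
  elim=> [|k IH] /=.
    by rewrite /v /= expr0.
  have ev1 : v i0 = X1 by rewrite /v eqxx.
  rewrite ev1.
  have := repT_add (repT_mul IH rX1) (repT_mul (repT_cst (-1 : K)) (repT_mul rX1 IH)).
  congr repT; rewrite ?exprS; ring.
have [_ hb _ [_ [eb _]]] := key m.-1.
have [_ [hz _]] := H g v inAv.
move: (hz fset0); rewrite /f1 coef_sc0 // eb /Defs.coefE big_nil.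
by move/eqP; rewrite signr_eq0.
Qed.
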